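(* A topological space $X$ is openly irresolvable if and only if the formula $\Diamond^*(\Box^*\varphi\lor\Box^*\neg\varphi)$ is $d$-valid in $X$ for every modal formula $\varphi$.
   Context: $\Diamond^*\psi$ abbreviates $\psi\lor\Diamond\psi$ and $\Box^*\psi$ abbreviates $\psi\land\Box\psi$. $d$-semantics: a model on a space $X$ is a valuation of propositional variables by subsets of $X$; truth sets $\mathcal{M}_d(\varphi)$ interpret Boolean connectives as set operations, $\mathcal{M}_d(\Diamond\varphi)=\mathrm{d}_X(\mathcal{M}_d(\varphi))$ where $\mathrm{d}_XY$ is the set of limit points of $Y$ ($x$ such that every $O-\{x\}$, $O$ an open neighbourhood of $x$, meets $Y$), and $\Box=\neg\Diamond\neg$. A formula is $d$-valid in $X$ if its truth set is $X$ in every model on $X$. A space is resolvable if it has two disjoint non-empty dense subsets, irresolvable otherwise; $X$ is openly irresolvable if every non-empty open subspace of $X$ is irresolvable. *)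

(* Defs.v *)
From HB Require Import structures.
From mathcomp Require Import all_boot all_classical topology.
Set Implicit Arguments. Unset Strict Implicit. Unset Printing Implicit Defensive.
Local Open Scope classical_set_scope.

Inductive form : Type :=
  | Var : nat -> form
  | Bot : form
  | Neg : form -> form
  | And : form -> form -> form
  | Or  : form -> form -> form
  | Imp : form -> form -> form
  | Dia : form -> form.

Definition Box (p : form) : form := Neg (Dia (Neg p)).
Definition DiaS (p : form) : form := Or p (Dia p).
Definition BoxS (p : form) : form := And p (Box p).

Definition dset (X : topologicalType) (Y : set X) : set X :=
  [set x | forall O : set X, open O -> O x -> exists y, O y /\ y <> x /\ Y y].

Fixpoint truth (X : topologicalType) (v : nat -> set X) (p : form) : set X :=
  match p with
  | Var n => v n
  | Bot => set0
  | Neg q => ~` truth v q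
  | And q r => truth v q `&` truth v r
  | Or q r => truth v q `|` truth v r
  | Imp q r => ~` truth v q `|` truth v r
  | Dia q => dset (truth v q)
  end.

Definition d_valid (X : topologicalType) (p : form) : Prop :=
  forall v : nat -> set X, truth v p = setT.

(* A is dense in the subspace U (subspace topology: open sets are U `&` O, O open) *)
Definition dense_in (X : topologicalType) (U A : set X) : Prop :=
  A `<=` U /\ forall O : set X, open O -> U `&` O !=set0 -> A `&` O !=set0.

Definition resolvable_sub (X : topologicalType) (U : set X) : Prop :=
  exists A B : set X, dense_in U A /\ dense_in U B /\ A `&` B = set0
                      /\ A !=set0 /\ B !=set0.

Definition resolvable (X : topologicalType) : Prop := resolvable_sub (@setT X).

Definition openly_irresolvable (X : topologicalType) : Prop :=
  forall U : set X, open U -> U !=set0 -> ~ resolvable_sub U.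

(* Main.v *)
Require Import Defs.
From mathcomp Require Import all_boot all_classical topology.
From Stdlib Require Import Classical.
Local Open Scope classical_set_scope.

Lemma box_int (X : topologicalType) (S : set X) (z : X) :
  (S z /\ ~ dset (~` S) z) <-> exists W : set X, open W /\ W z /\ W `<=` S.
Proof.
split.
- move=> [Sz nd].
  apply: NNPP => nW; apply: nd => O oO Oz.
  apply: NNPP => ne; apply: nW; exists O; split => //; split => // y Oy.
  case: (classic (y = z)) => [->//|yz].
  apply: NNPP => nSy; apply: ne; by exists y.
- move=> [W [oW [Wz WS]]]; split; first exact: WS.
  move=> /(_ W oW Wz) [y [Wy [_ nSy]]]; exact: nSy (WS _ Wy).
Qed.

Theorem lemma7 (X : topologicalType) :
  openly_irresolvable X <->
  (forall phi : form, d_valid X (DiaS (Or (BoxS phi) (BoxS (Neg phi))))).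
Proof.
split.
- move=> oi phi v; apply/seteqP; split => // x _.
  set A := truth v phi.
  set I := truth v (Or (BoxS phi) (BoxS (Neg phi))).
  apply: NNPP => nx.
  have nIx : ~ I x by move=> h; apply: nx; left.
  have ndx : ~ dset I x by move=> h; apply: nx; right.
  have [O [oO [Ox OI]]] : exists O : set X, open O /\ O x /\ forall y, O y -> ~ I y.
    apply: NNPP => nO; apply: ndx => O oO Ox.
    apply: NNPP => ne; apply: nO; exists O; split => //; split => // y Oy Iy.
    case: (classic (y = x)) => [yx|yx]; first by subst y.
    apply: ne; by exists y.
  apply: (oi O oO); first by exists x.
  exists (O `&` A), (O `&` ~` A).
  have dens : forall S : set X, (forall z, (exists W : set X, open W /\ W z /\ W `<=` ~` S) -> I z)
      -> dense_in O (O `&` S).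
    move=> S hS; split; first by move=> y [].
    move=> O' oO' [z [Oz O'z]].
    apply: NNPP => ne.
    apply: (OI z Oz); apply: hS; exists (O `&` O'); split; first exact: openI.
    split => // y [Oy O'y] Sy; apply: ne; by exists y.
  have dA : dense_in O (O `&` A).
    apply: dens => z hz; right; rewrite /=; apply/box_int.
    by [].
  have dB : dense_in O (O `&` ~` A).
    apply: dens => z [W [oW [Wz WS]]]; left; rewrite /=; apply/box_int.
    exists W; split => //; split => // y Wy; apply: NNPP; exact: WS.
  split => //; split => //; split.
    by apply/seteqP; split => y // [[_ Ay] [_ nAy]].
  have ne : forall S, dense_in O S -> S !=set0.
    move=> S [_ d]; have [y [Sy _]] := d setT openT (ex_intro _ x (conj Ox Logic.I)).
    by exists y.
  by split; apply: ne.
- move=> val U oU [x Ux] [A [B [[AU dA] [[BU dB] [AB _]]]]].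
  have := val (Var 0) (fun _ => A).
  move=> /seteqP [_ /(_ x Logic.I)] hx.
  have [y [Uy Iy]] : exists y, U y /\ truth (fun _ => A) (Or (BoxS (Var 0)) (BoxS (Neg (Var 0)))) y.
    case: hx => [h|h]; first by exists x.
    have [y [Uy [_ Iy]]] := h U oU Ux; by exists y.
  case: Iy => /box_int [W [oW [Wy WS]]].
  + have [z [Bz Wz]] := dB W oW (ex_intro _ y (conj Uy Wy)).
    have : (A `&` B) z by split => //; exact: WS.
    by rewrite AB.
  + have [z [Az Wz]] := dA W oW (ex_intro _ y (conj Uy Wy)).
    exact: WS _ Wz Az.
Qed.
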